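(* Let $B$ be a finite set of vincular patterns, let $p\in S_k$ be a prefix pattern and let $\vec v\in\mathbb{N}^{k+1}$. Suppose every permutation $\pi\in A(p,\vec v)$ contains a copy of some $(\sigma,X)\in B$ such that all positions of the head of that copy lie in $\{1,\dots,k\}$ (i.e. the letters of the copy corresponding to the head of $(\sigma,X)$ are among $\pi_1\cdots\pi_k$). Then $\vec v$ is a gap vector for $p$ with respect to $B$.
   Context: For a word $w$ of distinct integers, $\mathrm{red}(w)$ replaces the $i$-th smallest letter by $i$; $u\sim w$ means $\mathrm{red}(u)=\mathrm{red}(w)$. A vincular pattern of length $\ell$ is a pair $(\sigma,X)$ with $\sigma\in S_\ell$ and $X\subseteq[\ell-1]$. A permutation $\pi\in S_n$ contains $(\sigma,X)$ if there are indices $i_1<\dots<i_\ell$ with $\mathrm{red}(\pi_{i_1}\cdots\pi_{i_\ell})=\sigma$ and $i_{x+1}=i_x+1$ for every $x\in X$; the subsequence $\pi_{i_1}\cdots\pi_{i_\ell}$ is a copy. $\pi$ avoids a set $B$ of such patterns if it contains none of them. The head of $(\sigma,X)$ is the pattern formed by its first $m+1$ letters, $(\mathrm{red}(\sigma_1\cdots\sigma_{m+1}),X)$, where $m=\max X$ ($m=0$ if $X=\emptyset$). For a word $w\in[n]^k$ with distinct letters, let $c_i$ be its $i$-th smallest letter, $c_0=0$, $c_{k+1}=n+1$; the spacing vector $\vec g(n,w)\in\mathbb{N}^{k+1}$ has $i$-th component $c_i-c_{i-1}-1$. For $p\in S_k$ and such $w$ with $\mathrm{red}(w)=p$, let $S_n^B(p;w)$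 be the set of $B$-avoiding $\pi\in S_n$ with $\pi_i=w_i$ for $1\le i\le k$. A vector $\vec v\in\mathbb{N}^{k+1}$ is a gap vector for $p$ with respect to $B$ if for every $n$ and every such $w$ with $\vec g(n,w)\ge\vec v$ (componentwise), $S_n^B(p;w)=\emptyset$. Finally, $A(p,\vec v)$ is the set of permutations $\pi\in S_{k+|\vec v|}$ (where $|\vec v|$ is the sum of the components) with $\pi_1\cdots\pi_k\sim p$ and $\vec g(k+|\vec v|,\pi_1\cdots\pi_k)=\vec v$. *)

(* Defs.v *)
(* Permutations and words are sequences of naturals;
   positions are 0-indexed internally (position i here = position i+1 in the paper). *)
From mathcomp Require Import all_boot.
Set Implicit Arguments. Unset Strict Implicit. Unset Printing Implicit Defensive.

Definition is_perm (n : nat) (s : seq nat) : bool := perm_eq s (iota 1 n).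

(* red(w): replace the i-th smallest letter by i (w has distinct letters) *)
Definition red (w : seq nat) : seq nat :=
  [seq (count (fun y => y < x) w).+1 | x <- w].

(* a vincular pattern (sigma, X), sigma in S_l, X subset of [l-1] *)
Definition vpat := (seq nat * seq nat)%type.
Definition vsig (P : vpat) : seq nat := P.1.
Definition vX (P : vpat) : seq nat := P.2.

Definition wf_vpat (P : vpat) : bool :=
  is_perm (size (vsig P)) (vsig P) && all (fun x => 0 < x < size (vsig P)) (vX P).

(* I = (i_1 < ... < i_l) (0-indexed) gives a copy of P in pi:
   red(pi_{i_1} ... pi_{i_l}) = sigma and i_{x+1} = i_x + 1 for all x in X *)
Definition is_copy (pi : seq nat) (P : vpat) (I : seq nat) : bool :=
  [&& sorted ltn I, size I == size (vsig P), all (fun i => i < size pi) I,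
      red [seq nth 0 pi i | i <- I] == vsig P
    & all (fun x => nth 0 I x == (nth 0 I x.-1).+1) (vX P)].

Definition contains (pi : seq nat) (P : vpat) : Prop := exists I, is_copy pi P I.

Definition avoids (pi : seq nat) (B : seq vpat) : Prop :=
  forall P, P \in B -> ~ contains pi P.

(* m = max X (0 if X empty); the head consists of the first m+1 letters *)
Definition head_len (P : vpat) : nat := (foldr maxn 0 (vX P)).+1.

(* spacing vector g(n,w): components c_i - c_{i-1} - 1, i = 1..k+1,
   with c_0 = 0, c_{k+1} = n+1, c_1 < ... < c_k the letters of w *)
Definition gvec (n : nat) (w : seq nat) : seq nat :=
  pairmap (fun a b => b - a - 1) 0 (rcons (sort leq w) n.+1).

Definition word_in (n k : nat) (w : seq nat) : bool :=
  [&& size w == k, uniq w & all (fun x => 0 < x <= n) w].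

Definition SnB (n : nat) (B : seq vpat) (p w : seq nat) (pi : seq nat) : Prop :=
  [/\ is_perm n pi, avoids pi B & take (size p) pi = w].

Definition gap_vector (B : seq vpat) (p v : seq nat) : Prop :=
  forall (n : nat) (w : seq nat),
    word_in n (size p) w -> red w = p -> all2 leq v (gvec n w) ->
    forall pi, ~ SnB n B p w pi.

Definition in_A (p v : seq nat) (pi : seq nat) : Prop :=
  let N := size p + sumn v in
  [/\ is_perm N pi, red (take (size p) pi) = p & gvec N (take (size p) pi) = v].

(* Main.v *)
Require Import Defs.
From mathcomp Require Import all_boot.
From mathcomp Require Import zify.
Set Implicit Arguments. Unset Strict Implicit. Unset Printing Implicit Defensive.

Definition fdec (x y : nat) := if x < y then y.-1 else y.
Definition dd (a b : nat) := b - a - 1.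
Definition dx (x a b : nat) := if (a < x) && (x < b) then (b - a - 1).-1 else b - a - 1.

Lemma fdec_lt x y z : y != x -> z != x -> (fdec x y < fdec x z) = (y < z).
Proof. rewrite /fdec => Hy Hz; do 2 case: ifP => ? ; apply/idP/idP; lia. Qed.

Lemma fdec_inj x y z : y != x -> z != x -> fdec x y = fdec x z -> y = z.
Proof. rewrite /fdec => Hy Hz; do 2 case: ifP => ? ; lia. Qed.

Lemma is_permP n s : is_perm n s <-> uniq s /\ (forall y, y \in s = (0 < y <= n)).
Proof.
rewrite /is_perm; split.
  move=> H; split; first by rewrite (perm_uniq H) iota_uniq.
  by move=> y; rewrite (perm_mem H) mem_iota add1n ltnS.
case=> U M; apply: uniq_perm => //; first exact: iota_uniq.
by move=> y; rewrite M mem_iota add1n ltnS.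
Qed.

Lemma last_ge a s : path ltn a s -> a + size s <= last a s.
Proof.
elim: s a => [|b s IH] a /=; first lia.
move=> /andP [H1 H2]; have := IH _ H2; lia.
Qed.

Lemma sum_gap a0 s : path ltn a0 s ->
  sumn (pairmap (fun a b => b - a - 1) a0 s) = last a0 s - a0 - size s.
Proof.
elim: s a0 => [|b s IH] a0 /=; first lia.
move=> /andP [H1 H2]; rewrite IH //; have := last_ge H2; lia.
Qed.

Lemma pairmap_dx_far x a s : x < a -> path ltn a s ->
  pairmap (dx x) a s = pairmap (fun a b => b - a - 1) a s.
Proof.
elim: s a => [|b s IH] a //= Hxa /andP [H1 H2].
rewrite IH; last by []; last lia.
rewrite /dx; case: ifP => //; lia.
Qed.

Lemma gap_step a0 s v : path ltn a0 s ->
  all2 leq v (pairmap (fun a b => b - a - 1) a0 s) ->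
  v != pairmap (fun a b => b - a - 1) a0 s ->
  exists x, [/\ a0 < x, x < last a0 s, x \notin s & all2 leq v (pairmap (dx x) a0 s)].
Proof.
elim: s a0 v => [|b s IH] a0 [|v0 v] //=.
move=> /andP [H1 H2] /andP [Hv0 Hv] Hne.
have Hall := order_path_min ltn_trans H2.
have Hl := last_ge H2.
case: (ltnP v0 (b - a0 - 1)) => Hc.
  exists a0.+1; split.
  - by [].
  - lia.
  - rewrite in_cons negb_or; apply/andP; split; first lia.
    apply/negP => Hin; move/allP: Hall => /(_ _ Hin); lia.
  - rewrite pairmap_dx_far //; last lia.
    rewrite Hv andbT /dx; case: ifP => ?; lia.
have E : v0 = b - a0 - 1 by lia.
have Hne' : v != pairmap (fun a b => b - a - 1) b s.
  apply: contra Hne => /eqP ->; by rewrite E.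
have [x [Hx1 Hx2 Hx3 Hx4]] := IH _ _ H2 Hv Hne'.
exists x; split => //.
- lia.
- rewrite in_cons negb_or Hx3 andbT; lia.
- rewrite Hx4 andbT /dx; case: ifP => ?; lia.
Qed.

Lemma pairmap_dec x a0 s : a0 != x -> x \notin s -> path ltn a0 s ->
  pairmap (fun a b => b - a - 1) (fdec x a0) (map (fdec x) s) = pairmap (dx x) a0 s.
Proof.
elim: s a0 => [|b s IH] a0 //= Ha; rewrite in_cons negb_or => /andP [Hb Hs] /andP [H1 H2].
rewrite IH //; last by rewrite eq_sym.
congr (_ :: _); rewrite /fdec /dx; do 3 case: ifP => ?; lia.
Qed.

Lemma path_w n w : uniq w -> all (fun y => 0 < y <= n) w ->
  path ltn 0 (rcons (sort leq w) n.+1).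
Proof.
move=> U A; rewrite rcons_path; apply/andP; split.
  rewrite (path_sortedE ltn_trans) ltn_sorted_uniq_leq sort_uniq U.
  rewrite sort_sorted ?andbT; last exact: leq_total.
  rewrite all_sort; apply: sub_all A => y /=; lia.
have := mem_last 0 (sort leq w); rewrite in_cons => /orP [/eqP ->//|].
rewrite mem_sort => H; move/allP: A => /(_ _ H) /=; lia.
Qed.

Lemma sort_dec x w : x \notin w ->
  sort leq (map (fdec x) w) = map (fdec x) (sort leq w).
Proof.
move=> Hx.
apply: (@homo_sort_map_in _ _ (fun y => y != x)).
- move=> a b Ha Hb /=; rewrite /fdec; do 2 case: ifP => ?; lia.
- move=> a b c Ha Hb Hc /=; rewrite /fdec; do 3 case: ifP => ?; lia.
- move=> a b _ _; exact: leq_total.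
- move=> a b Ha Hb /=; rewrite /fdec; do 2 case: ifP => ?; lia.
- apply/allP => y Hy /=; apply/eqP => E; by rewrite -E Hy in Hx.
Qed.

Lemma gvec_dec n x w : 0 < x <= n.+1 -> x \notin w -> uniq w ->
  all (fun y => 0 < y <= n.+1) w ->
  gvec n (map (fdec x) w) = pairmap (dx x) 0 (rcons (sort leq w) n.+2).
Proof.
move=> Hx Hw U A; rewrite /gvec sort_dec //.
have -> : rcons [seq fdec x i | i <- sort leq w] n.+1 =
   map (fdec x) (rcons (sort leq w) n.+2).
  rewrite map_rcons; congr rcons; rewrite /fdec ifT //; lia.
rewrite -pairmap_dec.
- by have -> : fdec x 0 = 0 by rewrite /fdec ltn0.
- lia.
- by rewrite mem_rcons in_cons negb_or mem_sort Hw andbT; lia.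
- exact: path_w.
Qed.

Lemma red_dec x u : x \notin u -> red (map (fdec x) u) = red u.
Proof.
move=> Hx; rewrite /red -map_comp; apply/eq_in_map => z Hz /=.
rewrite count_map; congr (_.+1); apply: eq_in_count => y Hy /=.
apply: fdec_lt; apply/eqP => E; [by rewrite -E Hy in Hx | by rewrite -E Hz in Hx].
Qed.

Definition phi (q j : nat) := if j < q then j else j.+1.

Lemma nth_phi a b (x : nat) j : nth 0 (a ++ x :: b) (phi (size a) j) = nth 0 (a ++ b) j.
Proof.
rewrite /phi !nth_cat; case: (ltnP j (size a)) => H; first by rewrite H.
rewrite ifF; last lia.
by rewrite subSn.
Qed.

Lemma le_foldr_max X y : y \in X -> y <= foldr maxn 0 X.
Proof.
elim: X => [|z X IH] //=; rewrite in_cons => /orP [/eqP ->|H]; first exact: leq_maxl.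
apply: leq_trans (IH H) _; exact: leq_maxr.
Qed.

Lemma lift_copy a b x k P I : k <= size a -> x \notin a ++ b -> wf_vpat P ->
  is_copy (map (fdec x) (a ++ b)) P I -> all (fun i => i < k) (take (head_len P) I) ->
  is_copy (a ++ x :: b) P (map (phi (size a)) I) /\
  all (fun i => i < k) (take (head_len P) (map (phi (size a)) I)).
Proof.
move=> Hk Hx /andP [_ /allP HX].
move=> /and5P [Hs /eqP Hsz Ha /eqP Hr /allP Had] Hh.
have Hhd : forall i, i < head_len P -> i < size I -> nth 0 I i < k.
  move=> i Hi1 Hi2; move/allP: Hh; apply.
  rewrite -(nth_take 0 Hi1); apply: mem_nth; rewrite size_take; case: ifP => _ //; lia.
split; last first.
  rewrite -map_take all_map; apply: (sub_all _ Hh) => i /= Hi; by rewrite /phi (leq_trans Hi Hk).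
rewrite /is_copy; apply/and5P; split.
- rewrite sorted_map; apply: sub_sorted Hs => i j /=; rewrite /phi; do 2 case: ifP => ?; lia.
- by rewrite size_map Hsz.
- rewrite all_map; apply: (sub_all _ Ha) => i /=; rewrite size_map !size_cat /= /phi; case: ifP => ?; lia.
- rewrite -map_comp.
  have -> : [seq (nth 0 (a ++ x :: b) \o phi (size a)) i | i <- I] = [seq nth 0 (a ++ b) i | i <- I].
    by apply/eq_in_map => i _ /=; rewrite nth_phi.
  rewrite -(red_dec (x := x)).
    rewrite -Hr; apply/eqP; congr red; rewrite -map_comp; apply/eq_in_map => i Hi /=.
    rewrite (nth_map 0) //; move/allP: Ha => /(_ _ Hi); by rewrite size_map.
  apply/mapP => [[i Hi E]]; move: Hx; rewrite E mem_nth //.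
  by move/allP: Ha => /(_ _ Hi); rewrite size_map.
- apply/allP => y Hy; move: (Had _ Hy) (HX _ Hy) => /eqP E /andP [Hy1 Hy2].
  have Hyh : y < head_len P by rewrite /head_len ltnS; exact: le_foldr_max.
  have Hyi : y < size I by rewrite Hsz.
  rewrite !(nth_map 0) //; last lia.
  have H1 := Hhd _ Hyh Hyi.
  have H2 := Hhd y.-1 ltac:(lia) ltac:(lia).
  rewrite /phi E !ifT //; lia.
Qed.

Lemma perm_dec n x a b : is_perm n.+1 (a ++ x :: b) -> is_perm n (map (fdec x) (a ++ b)).
Proof.
move=> /is_permP [Up Mp].
have Hx : 0 < x <= n.+1 by rewrite -Mp mem_cat in_cons eqxx orbT.
have Uab : uniq (a ++ b) /\ x \notin a ++ b.
  move: Up; rewrite uniq_catC /= mem_cat => /andP [H1 H2].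
  by rewrite uniq_catC H2 mem_cat orbC.
case: Uab => Uab Xab.
apply/is_permP; split.
  rewrite map_inj_in_uniq // => y z Hy Hz; apply: fdec_inj.
  - by apply: contraNneq Xab => <-.
  - by apply: contraNneq Xab => <-.
move=> y; apply/mapP/idP.
  move=> [z Hz ->].
  have : z \in a ++ x :: b by move: Hz; rewrite !mem_cat in_cons => /orP [->|->] //; rewrite !orbT.
  rewrite Mp => Hz'.
  have Hzx : z != x by apply: contraNneq Xab => <-.
  clear -Hz' Hzx Hx; rewrite /fdec; case: ifP => ?; lia.
move=> Hy; exists (if y < x then y else y.+1).
  have Hzx : (if y < x then y else y.+1) != x by clear -Hy; case: ifP => ?; lia.
  have : (if y < x then y else y.+1) \in a ++ x :: b by rewrite Mp; clear -Hy Hx; case: ifP => ?; lia.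
  by rewrite !mem_cat in_cons (negbTE Hzx) /=.
clear -Hy Hx; rewrite /fdec; case: (ltnP y x) => H; [rewrite ifF; lia | rewrite ifT; lia].
Qed.

Definition Qp (B : seq vpat) k pi := exists P I,
  [/\ P \in B, is_copy pi P I & all (fun i => i < k) (take (head_len P) I)].

Lemma prefix_facts n pi k : is_perm n pi ->
  uniq (take k pi) /\ all (fun y => 0 < y <= n) (take k pi).
Proof.
move=> /is_permP [U M]; split; first exact: take_uniq.
apply/allP => y /mem_take; by rewrite M.
Qed.

Lemma base_case p v n pi : is_perm n pi -> red (take (size p) pi) = p ->
  size p <= n -> v = gvec n (take (size p) pi) -> in_A p v pi.
Proof.
move=> Hp Hr Hk E.
have Hs : size pi = n by have := perm_size Hp; rewrite size_iota.
have [U A] := prefix_facts (size p) Hp.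
have HN : size p + sumn v = n.
  rewrite E /gvec sum_gap; last exact: path_w.
  by rewrite last_rcons size_rcons size_sort size_takel ?Hs // subn0 subSS subnKC.
by rewrite /in_A HN; split.
Qed.

Lemma key B p v : all wf_vpat B -> (forall pi, in_A p v pi -> Qp B (size p) pi) ->
  forall n pi, is_perm n pi -> red (take (size p) pi) = p -> size p <= n ->
  all2 leq v (gvec n (take (size p) pi)) -> Qp B (size p) pi.
Proof.
move=> HB HA n; elim: n => [|n IH] pi Hp Hr Hk Hv.
  case: (eqVneq v (gvec 0 (take (size p) pi))) => [E|Ne].
    by apply: HA; apply: base_case Hp Hr Hk E.
  have [U A] := prefix_facts (size p) Hp.
  have [x [Hx1 Hx2 _ _]] := gap_step (path_w U A) Hv Ne.
  move: Hx2; rewrite last_rcons; lia.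
case: (eqVneq v (gvec n.+1 (take (size p) pi))) => [E|Ne].
  by apply: HA; apply: base_case Hp Hr Hk E.
have [U A] := prefix_facts (size p) Hp.
have [x [Hx1 Hx2 Hx3 Hx4]] := gap_step (path_w U A) Hv Ne.
move: Hx2 Hx3; rewrite last_rcons mem_rcons in_cons negb_or mem_sort => Hx2 /andP [_ Hxw].
have /is_permP [Up Mp] := Hp.
have Hxpi : x \in pi by rewrite Mp; lia.
move: Hp Hr Hk Hv Hx4 Hxw U A Up Mp; case/splitPr: Hxpi => a b.
move=> Hp Hr Hk Hv Hx4 Hxw U A Up Mp.
have Uab : uniq (a ++ b) /\ x \notin a ++ b.
  move: Up; rewrite uniq_catC /= mem_cat => /andP [H1 H2].
  by rewrite uniq_catC H2 mem_cat orbC.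
case: Uab => Uab Xab.
have Hka : size p <= size a.
  case: (leqP (size p) (size a)) => // Hlt.
  move: Hxw; rewrite take_cat ifF; last by apply/negbTE; rewrite -leqNgt ltnW.
  rewrite mem_cat; case E: (size p - size a) => [|m]; first lia.
  by rewrite /= in_cons eqxx orbT.
have Tk : forall c, take (size p) (a ++ c) = take (size p) a.
  move=> c; rewrite take_cat; case: ifP => // H.
  have -> : size p - size a = 0 by lia.
  by rewrite take0 cats0 (_ : size p = size a) ?take_size //; lia.
have Hsz : size (a ++ x :: b) = n.+1 by have := perm_size Hp; rewrite size_iota.
set pi' := map (fdec x) (a ++ b).
have Hp' : is_perm n pi' by apply: perm_dec.
have Hr' : red (take (size p) pi') = p.
  by rewrite /pi' -map_take Tk red_dec // -(Tk (x :: b)).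
have Hk' : size p <= n.
  apply: leq_trans Hka _; rewrite -ltnS -Hsz size_cat /= addnS ltnS; exact: leq_addr.
have Hv' : all2 leq v (gvec n (take (size p) pi')).
  rewrite /pi' -map_take Tk gvec_dec -?(Tk (x :: b)) //; lia.
have [P [I [HPB HI HIh]]] := IH _ Hp' Hr' Hk' Hv'.
have [HC HCh] := lift_copy Hka Xab (allP HB _ HPB) HI HIh.
by exists P, (map (phi (size a)) I).
Qed.

Theorem mainTheorem1 (B : seq vpat) (p v : seq nat) :
  all wf_vpat B ->
  is_perm (size p) p ->
  size v = (size p).+1 ->
  (forall pi, in_A p v pi ->
     exists P I, [/\ P \in B, is_copy pi P I &
                     all (fun i => i < size p) (take (head_len P) I)]) ->
  gap_vector B p v.
Proof.
move=> HB _ _ HA n w Hw Hrw Hv pi [Hp Hav Ht].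
have Hs : size pi = n by have := perm_size Hp; rewrite size_iota.
move: Hw; rewrite /word_in => /and3P [/eqP Hsw _ _].
have Hk : size p <= n by rewrite -Hs -Hsw -Ht size_take; case: ifP => ?; lia.
have [P [I [HPB HI _]]] := key HB HA Hp ltac:(by rewrite Ht) Hk ltac:(by rewrite Ht).
by apply: (Hav P HPB); exists I.
Qed.
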